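(* Let $\theta\in(0,1)$ be irrational, $\tau=1$, $k\ge1$ even, and $b\ge1$ an integer with $\frac1{(b+1)(b+2)}\le q_k\|q_k\theta\|<\frac1{b(b+1)}$. Then $$\bigcup_{i=1}^{q_k}\Big(i\theta-\frac1{q_{k+1}},\;i\theta+(b-1)\|q_k\theta\|+\frac1{(b+1)q_k}\Big)\subset F_k.$$
   Context: $\mathbb T=\mathbb R/\mathbb Z$, points identified with fractional parts; $(x-a,x+b)$ denotes the projection to $\mathbb T$ of the real interval. $\|t\|$ is the distance to the nearest integer; $B(x,r)$ the open ball in $\mathbb T$. $q_k$ are the convergent denominators of $\theta=[0;a_1,a_2,\dots]$ ($q_0=1$, $q_{k+1}=a_{k+1}q_k+q_{k-1}$). With $\tau=1$: $G_n=\bigcup_{i=1}^nB(i\theta,n^{-1})$ and $F_k=\bigcap_{n=q_k+1}^{q_{k+1}}G_n$. *)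

(* Defs.v *)
From Stdlib Require Import Reals Lra Lia ZArith.
Open Scope R_scope.

Definition dist_int (t : R) : R := Rmin (frac_part t) (1 - frac_part t).

Definition irrational (x : R) : Prop :=
  forall (p : Z) (r : Z), r <> 0%Z -> x <> IZR p / IZR r.

Fixpoint cf_x (theta : R) (n : nat) : R :=
  match n with
  | O => theta
  | S m => frac_part (/ cf_x theta m)
  end.

(* Partial quotients: a_{n+1} = floor (1 / cf_x n), so theta = [0; a_1, a_2, ...]. *)
Definition cf_a (theta : R) (n : nat) : nat :=
  match n with
  | O => O
  | S m => Z.to_nat (Int_part (/ cf_x theta m))
  end.

(* (q_n, q_{n-1}) with q_0 = 1, q_{-1} = 0, q_{n+1} = a_{n+1} q_n + q_{n-1}. *)
Fixpoint qpair (theta : R) (n : nat) : nat * nat :=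
  match n with
  | O => (1%nat, 0%nat)
  | S m => let (qm, qm1) := qpair theta m in (cf_a theta (S m) * qm + qm1, qm)%nat
  end.

Definition q (theta : R) (n : nat) : nat := fst (qpair theta n).

(* Subsets of T = R/Z represented as predicates on R (1-periodic ones). *)
Definition ballT (x r : R) (y : R) : Prop := dist_int (y - x) < r.

Definition G (theta : R) (n : nat) (y : R) : Prop :=
  exists i : nat, (1 <= i <= n)%nat /\ ballT (INR i * theta) (/ INR n) y.

Definition F (theta : R) (k : nat) (y : R) : Prop :=
  forall n : nat, (q theta k + 1 <= n <= q theta (S k))%nat -> G theta n y.

(* Projection to T of the real interval (lo, hi): y lies in it iff some integer
   translate of y lies in (lo, hi). *)
Definition projInt (lo hi : R) (y : R) : Prop :=
  exists m : Z, lo < y + IZR m < hi.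

(* Main.v *)
Require Import Defs.
From Stdlib Require Import Reals ZArith Lra Lia Psatz.
Open Scope R_scope.

Fixpoint pik th k := match k with O => cf_x th 0 | S m => (pik th m * cf_x th (S m))%R end.
Definition ppr th k := match k with O => 1%R | S m => pik th m end.
Definition qpr th k := snd (qpair th k).

Lemma q_S th k : q th (S k) = (cf_a th (S k) * q th k + qpr th k)%nat.
Proof. unfold q, qpr; simpl; destruct (qpair th k); reflexivity. Qed.
Lemma qpr_S th k : qpr th (S k) = q th k.
Proof. unfold q, qpr; simpl; destruct (qpair th k); reflexivity. Qed.
Lemma pik_ppr th k : pik th k = ppr th k * cf_x th k.
Proof. destruct k; simpl; ring. Qed.

Lemma step th k : 0 < cf_x th k < 1 ->
  INR (cf_a th (S k)) = IZR (Int_part (/ cf_x th k)) /\ 1 <= IZR (Int_part (/ cf_x th k)) /\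
  / cf_x th k = IZR (Int_part (/ cf_x th k)) + cf_x th (S k) /\ 0 <= cf_x th (S k) < 1.
Proof.
  intros Hx.
  assert (Hi : / cf_x th k > 1). { rewrite <- Rinv_1. apply Rinv_lt_contravar; lra. }
  destruct (base_Int_part (/ cf_x th k)) as [H1 H2].
  assert (HZ : (0 < Int_part (/ cf_x th k))%Z) by (apply lt_IZR; lra).
  assert (HA : 1 <= IZR (Int_part (/ cf_x th k))) by (apply IZR_le; lia).
  change (cf_a th (S k)) with (Z.to_nat (Int_part (/ cf_x th k))).
  change (cf_x th (S k)) with (frac_part (/ cf_x th k)).
  rewrite INR_IZR_INZ, Z2Nat.id by lia.
  destruct (base_fp (/ cf_x th k)).
  unfold frac_part. repeat split; try lra; ring.
Qed.

Lemma alg s p x A x1 : x*(A+x1) = 1 -> A*(s*(p*x)) + (-s*p) = -1*s*(p*x*x1).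
Proof. intros H. replace (-s*p) with (-s*p*(x*(A+x1))) by (rewrite H; ring). ring. Qed.

Lemma inv th : 0 < th < 1 -> irrational th -> forall k,
  0 < cf_x th k < 1 /\ (1 <= q th k)%nat /\
  (exists z, INR (q th k) * th - IZR z = (-1)^k * pik th k) /\
  (exists z, INR (qpr th k) * th - IZR z = - (-1)^k * ppr th k).
Proof.
  intros Hth Hirr. induction k as [|k IH].
  - split; [simpl; lra|]. split; [unfold q; simpl; lia|]. split.
    + exists 0%Z. unfold q; simpl. ring.
    + exists 1%Z. unfold qpr. simpl. ring.
  - destruct IH as [Hx [Hq [[z1 E1] [z2 E2]]]].
    destruct (step th k Hx) as [Ha [HA [Hinv Hx1]]].
    set (A := IZR (Int_part (/ cf_x th k))) in *.
    assert (Hqq : INR (q th (S k)) = A * INR (q th k) + INR (qpr th k)).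
    { rewrite q_S, plus_INR, mult_INR, Ha. reflexivity. }
    assert (Hx' : cf_x th k * (A + cf_x th (S k)) = 1) by (rewrite <- Hinv; field; lra).
    assert (Ha1 : (1 <= cf_a th (S k))%nat) by (apply INR_le; rewrite Ha; change (INR 1) with 1; lra).
    assert (HQ' : (1 <= q th (S k))%nat) by (rewrite q_S; nia).
    assert (HD : exists z, INR (q th (S k)) * th - IZR z = (-1)^(S k) * pik th (S k)).
    { exists (Int_part (/ cf_x th k) * z1 + z2)%Z. rewrite plus_IZR, mult_IZR. fold A.
      rewrite Hqq.
      replace ((A * INR (q th k) + INR (qpr th k)) * th - (A * IZR z1 + IZR z2))
        with (A * (INR (q th k) * th - IZR z1) + (INR (qpr th k) * th - IZR z2)) by ring.
      rewrite E1, E2, pik_ppr. simpl pik. rewrite pik_ppr. simpl pow.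
      apply alg. exact Hx'. }
    assert (Hpos : 0 < cf_x th (S k)).
    { destruct (proj1 Hx1) as [Hlt|Heq]; [exact Hlt|].
      exfalso. destruct HD as [z Hz]. change (pik th (S k)) with (pik th k * cf_x th (S k)) in Hz. rewrite <- Heq in Hz.
      apply (Hirr z (Z.of_nat (q th (S k)))). lia.
      rewrite <- INR_IZR_INZ.
      assert (0 < INR (q th (S k))) by (apply lt_0_INR; lia).
      field_simplify_eq; [|lra]. lra. }
    split; [lra|]. split; [exact HQ'|]. split; [exact HD|].
    exists z1. rewrite qpr_S. simpl ppr. rewrite E1. simpl pow. ring.
Qed.

Lemma Pid th : 0<th<1 -> irrational th -> forall k,
  pik th k * (INR (q th (S k)) + INR (q th k) * cf_x th (S k)) = 1.
Proof.
  intros Hth Hirr. induction k as [|k IH].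
  - destruct (inv th Hth Hirr 0) as [Hx _].
    destruct (step th 0 Hx) as [Ha [HA [Hinv Hx1]]].
    assert (Hx' : cf_x th 0 * (IZR (Int_part (/ cf_x th 0)) + cf_x th 1) = 1) by (rewrite <- Hinv; field; lra).
    rewrite q_S, plus_INR, mult_INR, Ha. unfold qpr. change (pik th 0) with (cf_x th 0).
    change (INR (q th 0)) with 1. change (INR (snd (qpair th 0))) with 0.
    transitivity (cf_x th 0 * (IZR (Int_part (/ cf_x th 0)) + cf_x th 1)); [ring | exact Hx'].
  - destruct (inv th Hth Hirr (S k)) as [Hx _].
    destruct (step th (S k) Hx) as [Ha [HA [Hinv Hx1]]].
    set (A := IZR (Int_part (/ cf_x th (S k)))) in *.
    assert (Hx' : cf_x th (S k) * (A + cf_x th (S (S k))) = 1) by (rewrite <- Hinv; field; lra).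
    rewrite (q_S th (S k)), plus_INR, mult_INR, Ha, qpr_S. change (pik th (S k)) with (pik th k * cf_x th (S k)).
    rewrite <- IH.
    replace (pik th k * cf_x th (S k) * (A * INR (q th (S k)) + INR (q th k) + INR (q th (S k)) * cf_x th (S (S k))))
      with (pik th k * (INR (q th (S k)) * (cf_x th (S k) * (A + cf_x th (S (S k)))) + INR (q th k) * cf_x th (S k))) by ring.
    rewrite Hx'. ring.
Qed.

Lemma pik_pos th : 0<th<1 -> irrational th -> forall k, 0 < pik th k.
Proof.
  intros Hth Hirr. induction k.
  - exact (proj1 (proj1 (inv th Hth Hirr 0))).
  - destruct (inv th Hth Hirr (S k)) as [Hx _].
    change (pik th (S k)) with (pik th k * cf_x th (S k)). nra.
Qed.
Lemma dist_le t w : dist_int t <= Rabs (t + IZR w).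
Proof.
  unfold dist_int, frac_part. destruct (base_Int_part t) as [H1 H2].
  replace (t + IZR w) with ((t - IZR (Int_part t)) + IZR (Int_part t + w)) by (rewrite plus_IZR; ring).
  destruct (Z_lt_le_dec (Int_part t + w) 0) as [Hc|Hc].
  - assert (IZR (Int_part t + w) <= -1) by (apply IZR_le; lia).
    eapply Rle_trans; [apply Rmin_r|]. split_Rabs; lra.
  - assert (0 <= IZR (Int_part t + w)) by (apply IZR_le; lia).
    eapply Rle_trans; [apply Rmin_l|]. split_Rabs; lra.
Qed.

Lemma dist_frac z d : 0 <= d <= /2 -> dist_int (IZR z + d) = d.
Proof.
  intros Hd. destruct (Int_part_frac_part_spec (IZR z + d) z d) as [_ Hf]; [lra|reflexivity|].
  unfold dist_int. rewrite <- Hf. apply Rmin_left. lra.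
Qed.

Lemma keyineq (b t : nat) e : (1 <= b)%nat ->
  / ((INR b + 1) * (INR b + 2)) <= e -> e < / (INR b * (INR b + 1)) ->
  (INR b - 1) * e + / (INR b + 1) <= (INR t - 1) * e + / (INR t + 1).
Proof.
  intros Hb Hlo Hhi.
  assert (HB : 1 <= INR b) by (change 1 with (INR 1); apply le_INR; lia).
  assert (HT : 0 <= INR t) by apply pos_INR.
  set (B := INR b) in *. set (T := INR t) in *.
  set (w := / (T+1) * / (B+1)).
  assert (Hw : w * ((T+1)*(B+1)) = 1) by (unfold w; field; lra).
  assert (Hwp : 0 < w) by (unfold w; apply Rmult_lt_0_compat; apply Rinv_0_lt_compat; lra).
  assert (Hd : / (T+1) - / (B+1) = (B - T) * w) by (unfold w; field; lra).
  cut (0 <= (B - T) * (w - e)). { intros; nra. }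
  destruct (lt_eq_lt_dec t b) as [[Hl|Hl]|Hl].
  - assert (HTB : T + 1 <= B) by (unfold T, B; rewrite <- S_INR; apply le_INR; lia).
    assert (Hp : (B * (B+1)) * / (B * (B+1)) = 1) by (field; lra).
    assert (e * (B*(B+1)) < 1) by nra.
    assert (e * ((T+1)*(B+1)) <= 1) by nra.
    apply Rmult_le_pos; nra.
  - subst T B; rewrite Hl. nra.
  - assert (HTB : B + 1 <= T) by (unfold T, B; rewrite <- S_INR; apply le_INR; lia).
    assert (Hp : ((B+1) * (B+2)) * / ((B+1) * (B+2)) = 1) by (field; lra).
    assert (1 <= e * ((B+1)*(B+2))) by nra.
    assert (1 <= e * ((T+1)*(B+1))) by nra.
    assert (w <= e) by nra. nra.
Qed.
Theorem lemma4p1 (theta : R) (k b : nat) :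
  0 < theta < 1 -> irrational theta ->
  (1 <= k)%nat -> Nat.Even k -> (1 <= b)%nat ->
  / ((INR b + 1) * (INR b + 2)) <= INR (q theta k) * dist_int (INR (q theta k) * theta) ->
  INR (q theta k) * dist_int (INR (q theta k) * theta) < / (INR b * (INR b + 1)) ->
  forall y : R,
    (exists i : nat, (1 <= i <= q theta k)%nat /\
       projInt (INR i * theta - / INR (q theta (S k)))
               (INR i * theta + (INR b - 1) * dist_int (INR (q theta k) * theta)
                  + / ((INR b + 1) * INR (q theta k))) y) ->
    F theta k y.
Proof.
  intros Hth Hirr Hk Hev Hb Hlo Hhi y [i [Hi [m0 Hm0]]] n Hn.
  destruct (inv theta Hth Hirr k) as [Hxk [HQ [[z Ez] _]]].
  assert (Hs : (-1)^k = 1) by (destruct Hev as [h ->]; apply pow_1_even).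
  rewrite Hs, Rmult_1_l in Ez.
  set (d := pik theta k) in *.
  assert (Hd0 : 0 < d) by (apply pik_pos; auto).
  set (Q := q theta k) in *. set (N := q theta (S k)) in *.
  assert (HP := Pid theta Hth Hirr k). fold d Q N in HP.
  destruct (inv theta Hth Hirr (S k)) as [Hxk1 _].
  assert (HQr : 1 <= INR Q) by (change 1 with (INR 1); apply le_INR; lia).
  assert (Hpp : 0 < d * (INR Q * cf_x theta (S k))) by (apply Rmult_lt_0_compat; [lra|apply Rmult_lt_0_compat; lra]).
  assert (HdN : d * INR N < 1) by (rewrite Rmult_plus_distr_l in HP; lra).
  assert (HN2 : (2 <= N)%nat).
  { unfold N. rewrite q_S. destruct k as [|k']; [lia|]. rewrite qpr_S.
    destruct (inv theta Hth Hirr k') as [_ [Hq' _]].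
    destruct (step theta (S k') Hxk) as [Ha [HA _]].
    assert (Ha1 : (1 <= cf_a theta (S (S k')))%nat) by (apply INR_le; rewrite Ha; change (INR 1) with 1; lra).
    fold Q. nia. }
  assert (HNr : 2 <= INR N) by (change 2 with (INR 2); apply le_INR; lia).
  assert (Hdlt : d < / INR N).
  { apply Rmult_lt_reg_r with (INR N); [lra|]. rewrite Rinv_l by lra. lra. }
  assert (Hdist : dist_int (INR Q * theta) = d).
  { replace (INR Q * theta) with (IZR z + d) by lra. apply dist_frac.
    assert (/ INR N <= / 2) by (apply Rinv_le_contravar; lra). lra. }
  rewrite Hdist in Hlo, Hhi, Hm0.
  assert (HQ0 : Q <> 0%nat) by lia.
  set (t := (n / Q)%nat).
  assert (Hdm := Nat.div_mod n Q HQ0). assert (Hmu := Nat.mod_upper_bound n Q HQ0).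
  fold t in Hdm. set (r := (n mod Q)%nat) in *.
  assert (Ht1 : (1 <= t)%nat) by nia.
  assert (Hnr : INR n = INR Q * INR t + INR r) by (rewrite Hdm at 1; rewrite plus_INR, mult_INR; ring).
  assert (Hrr : INR r < INR Q) by (apply lt_INR; lia).
  assert (Hn0 : 0 < INR n) by (apply lt_0_INR; lia).
  assert (HnN : / INR N <= / INR n) by (apply Rinv_le_contravar; [lra| apply le_INR; lia]).
  assert (HnT : INR n < (INR t + 1) * INR Q) by nra.
  set (u := y + IZR m0 - INR i * theta).
  destruct (Rle_lt_dec u 0) as [Hu|Hu].
  - exists i. split; [lia|]. unfold ballT.
    eapply Rle_lt_trans; [apply (dist_le _ m0)|].
    replace (y - INR i * theta + IZR m0) with u by (unfold u; ring).
    rewrite Rabs_left1 by lra. unfold u. lra.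
  - set (m1 := Z.to_nat (Int_part (u / d))).
    destruct (base_Int_part (u / d)) as [Hb1 Hb2].
    assert (Hud : u / d * d = u) by (field; lra).
    assert (Hu0 : 0 < u / d) by (apply Rdiv_lt_0_compat; lra).
    assert (HZ : (0 <= Int_part (u / d))%Z) by (assert (-1 < Int_part (u / d))%Z by (apply lt_IZR; lra); lia).
    assert (Hm1 : INR m1 = IZR (Int_part (u / d))) by (unfold m1; rewrite INR_IZR_INZ, Z2Nat.id by lia; reflexivity).
    assert (Hm1a : INR m1 * d <= u).
    { apply Rle_trans with (u/d*d); [apply Rmult_le_compat_r; lra | lra]. }
    assert (Hm1b : u < (INR m1 + 1) * d).
    { apply Rle_lt_trans with (u/d*d); [lra | apply Rmult_lt_compat_r; lra]. }
    set (m := Nat.min m1 (t - 1)).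
    assert (Hmt : (m <= t - 1)%nat) by lia.
    exists (i + m * Q)%nat. split; [nia|]. unfold ballT.
    eapply Rle_lt_trans; [apply (dist_le _ (m0 + Z.of_nat m * z))|].
    replace (y - INR (i + m * Q) * theta + IZR (m0 + Z.of_nat m * z)) with (u - INR m * d).
    2:{ rewrite plus_IZR, mult_IZR, <- INR_IZR_INZ, plus_INR, mult_INR. unfold u.
        replace d with (INR Q * theta - IZR z) by lra. ring. }
    assert (Hmm : INR m <= INR m1) by (apply le_INR; lia).
    assert (Hmd : INR m * d <= INR m1 * d) by nra.
    rewrite Rabs_right by lra.
    destruct (le_lt_dec m1 (t - 1)) as [Hle|Hlt].
    + assert (m = m1) by lia. rewrite H. lra.
    + assert (Hmv : m = (t - 1)%nat) by lia.
      assert (HmT : INR m = INR t - 1) by (rewrite Hmv, minus_INR by lia; reflexivity).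
      assert (Hkey := keyineq b t (INR Q * d) Hb Hlo Hhi).
      assert (Hu2 : u < (INR b - 1) * d + / ((INR b + 1) * INR Q)) by (unfold u; lra).
      assert (E1 : (INR b - 1) * d + / ((INR b + 1) * INR Q)
                   = ((INR b - 1) * (INR Q * d) + / (INR b + 1)) * / INR Q).
      { assert (0 <= INR b) by apply pos_INR. field. split; lra. }
      assert (E2 : (INR t - 1) * d + / ((INR t + 1) * INR Q)
                   = ((INR t - 1) * (INR Q * d) + / (INR t + 1)) * / INR Q).
      { assert (0 <= INR t) by apply pos_INR. field. split; lra. }
      assert (HQi : 0 < / INR Q) by (apply Rinv_0_lt_compat; lra).
      assert (Hc : (INR b - 1) * d + / ((INR b + 1) * INR Q) <= (INR t - 1) * d + / ((INR t + 1) * INR Q)).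
      { rewrite E1, E2. apply Rmult_le_compat_r; lra. }
      assert (Hc2 : / ((INR t + 1) * INR Q) < / INR n) by (apply Rinv_lt_contravar; nra).
      rewrite HmT. lra.
Qed.
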